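(* Let $x\in\Pi[N]$, $h=H(x)$, and for $\mu\in\{0,1\}$ and $l\in\mathbb Z$ let $y^{\mu}[l]=\langle x,\psi_{[1],\mu}[\cdot-2l]\rangle$, $c^{\mu}[l]=\langle x,\varphi_{[1],\mu}[\cdot-2l]\rangle$ (both $N/2$-periodic in $l$), and $z^{\mu}_{\pm}=y^{\mu}\mp i\,c^{\mu}$. For an $N/2$-periodic sequence $v$ write $\hat v[n]_1=\sum_{l=0}^{N/2-1}v[l]\,\omega^{-2ln}$. Then for every $n\in\{0,\dots,N/2-1\}$: (i) $\begin{pmatrix}\hat z^{0}_{\pm}[n]_1\\ \hat z^{1}_{\pm}[n]_1\end{pmatrix}=\tfrac12\,\overline{\tilde M^{q}_{\pm}[n]}\begin{pmatrix}\hat x[n]\\ \hat x[n+N/2]\end{pmatrix}$, where the bar denotes entrywise complex conjugation; (ii) $M^{q}_{\pm}[n]\begin{pmatrix}\hat z^{0}_{\pm}[n]_1\\ \hat z^{1}_{\pm}[n]_1\end{pmatrix}=2\begin{pmatrix}\hat x[n]\pm i\,\hat h[n]\\ \hat x[n+N/2]\pm i\,\hat h[n+N/2]\end{pmatrix}$. In particular, applying the analysis filter bank with modulation matrix $\tilde M^q_{\pm}$ followed by the synthesis filter bank with modulation matrix $M^q_{\pm}$ to $x$ yields $2(x\pm iH(x))$, twice the analytic signal of $x$.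
   Context: Let $N=2^{J}$ with $J\ge 1$ an integer and $\omega=e^{2\pi i/N}$. $\Pi[N]$ denotes the real vector space of real-valued $N$-periodic sequences $x=\{x[k]\}_{k\in\mathbb Z}$, with inner product $\langle x,y\rangle=\sum_{k=0}^{N-1}x[k]y[k]$. The DFT of an $N$-periodic sequence is $\hat x[n]=\sum_{k=0}^{N-1}x[k]\omega^{-kn}$, with inverse $x[k]=\frac1N\sum_{n=0}^{N-1}\hat x[n]\omega^{kn}$. For $x\in\Pi[N]$, its discrete periodic Hilbert transform $H(x)\in\Pi[N]$ has DFT $\widehat{H(x)}[n]=-i\hat x[n]$ for $0<n<N/2$, $=i\hat x[n]$ for $N/2<n<N$, and $=0$ for $n\in\{0,N/2\}$ (indices mod $N$). Fix an integer $r\ge1$; let $U[n]=\tfrac12\big(\cos^{4r}\tfrac{\pi n}{N}+\sin^{4r}\tfrac{\pi n}{N}\big)$, $\beta[n]=\cos^{2r}\tfrac{\pi n}{N}/\sqrt{U[n]}$, $\alpha[n]=\omega^{n}\sin^{2r}\tfrac{\pi n}{N}/\sqrt{U[n]}$. The first-level wavelet packets $\psi_{[1],0},\psi_{[1],1}\in\Pi[N]$ have DFTs $\hat\psi_{[1],0}=\beta$, $\hat\psi_{[1],1}=\alpha$; the complementary wavelet packets $\varphi_{[1],\mu}\in\Pi[N]$ have DFT $\hat\varphi_{[1],\mu}[n]=-i\hat\psi_{[1],\mu}[n]$ for $0<n<N/2$, $=i\hat\psi_{[1],\mu}[n]$ for $N/2<n<N$, $=\hat\psi_{[1],\mu}[n]$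 for $n\in\{0,N/2\}$. Write $\hat g^{\mu}=\hat\varphi_{[1],\mu}$. Modulation matrices: $\tilde M[n]=\begin{pmatrix}\beta[n]&\beta[n+N/2]\\ \alpha[n]&\alpha[n+N/2]\end{pmatrix}$, $M[n]=\tilde M[n]^{T}$; $\tilde M^{c}[n]=\begin{pmatrix}\hat g^{0}[n]&\hat g^{0}[n+N/2]\\ \hat g^{1}[n]&\hat g^{1}[n+N/2]\end{pmatrix}$, $M^{c}[n]=\tilde M^{c}[n]^{T}$; and $\tilde M^{q}_{\pm}[n]=\tilde M[n]\pm i\,\tilde M^{c}[n]$, $M^{q}_{\pm}[n]=M[n]\pm i\,M^{c}[n]$. *)

(* Defs.v *)
From Stdlib Require Import Reals ZArith.
Open Scope R_scope.

Definition C : Type := (R * R)%type.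
Definition RtoC (a : R) : C := (a, 0).
Definition C0 : C := (0, 0).
Definition Ci : C := (0, 1).
Definition Cadd (z w : C) : C := (fst z + fst w, snd z + snd w).
Definition Cmul (z w : C) : C :=
  (fst z * fst w - snd z * snd w, fst z * snd w + snd z * fst w).
Definition Copp (z : C) : C := (- fst z, - snd z).
Definition Cconj (z : C) : C := (fst z, - snd z).
Definition Cexpi (t : R) : C := (cos t, sin t).

Fixpoint Csum (n : nat) (f : nat -> C) : C :=
  match n with O => C0 | S m => Cadd (Csum m f) (f m) end.
Fixpoint Rsum (n : nat) (f : nat -> R) : R :=
  match n with O => 0 | S m => Rsum m f + f m end.

(* sign for the +/- choice: s = true means "+", s = false means "-" *)
Definition sg (s : bool) : R := if s then 1 else -1.

Definition periodic (N : nat) (x : Z -> R) : Prop :=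
  forall k : Z, x (k + Z.of_nat N)%Z = x k.

Definition wpow (N : nat) (m : Z) : C := Cexpi (2 * PI * IZR m / INR N).

Definition dft (N : nat) (x : Z -> R) (n : Z) : C :=
  Csum N (fun k => Cmul (RtoC (x (Z.of_nat k))) (wpow N (- (Z.of_nat k * n)))).

Definition hilb_mult (N : nat) (n : Z) : C :=
  let Nz := Z.of_nat N in
  let m := (n mod Nz)%Z in
  if ((0 <? m) && (m <? Nz / 2))%Z%bool then Copp Ci
  else if ((Nz / 2 <? m) && (m <? Nz))%Z%bool then Ci
  else C0.

(* DFT of the complementary packet: -i f, i f, or f (indices mod N). *)
Definition compl_hat (N : nat) (f : Z -> C) (n : Z) : C :=
  let Nz := Z.of_nat N in
  let m := (n mod Nz)%Z in
  if ((0 <? m) && (m <? Nz / 2))%Z%bool then Cmul (Copp Ci) (f n)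
  else if ((Nz / 2 <? m) && (m <? Nz))%Z%bool then Cmul Ci (f n)
  else f n.

Definition cosN (N : nat) (n : Z) : R := cos (PI * IZR n / INR N).
Definition sinN (N : nat) (n : Z) : R := sin (PI * IZR n / INR N).
Definition Uf (N r : nat) (n : Z) : R :=
  / 2 * (cosN N n ^ (4 * r) + sinN N n ^ (4 * r)).
Definition beta (N r : nat) (n : Z) : C :=
  RtoC (cosN N n ^ (2 * r) / sqrt (Uf N r n)).
Definition alpha (N r : nat) (n : Z) : C :=
  Cmul (wpow N n) (RtoC (sinN N n ^ (2 * r) / sqrt (Uf N r n))).

Definition coef (N : nat) (x f : Z -> R) (l : Z) : R :=
  Rsum N (fun k => x (Z.of_nat k) * f (Z.of_nat k - 2 * l)%Z).

Definition zpm (s : bool) (y c : Z -> R) (l : Z) : C :=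
  Cadd (RtoC (y l)) (Cmul (RtoC (- sg s)) (Cmul Ci (RtoC (c l)))).

Definition dft1 (N : nat) (v : Z -> C) (n : Z) : C :=
  Csum (N / 2) (fun l => Cmul (v (Z.of_nat l)) (wpow N (- (2 * Z.of_nat l * n)))).

Definition modmat (N : nat) (f0 f1 : Z -> C) (n : Z) (i j : nat) : C :=
  let f := match i with O => f0 | _ => f1 end in
  match j with O => f n | _ => f (n + Z.of_nat N / 2)%Z end.

Definition Mt (N r : nat) : Z -> nat -> nat -> C :=
  modmat N (beta N r) (alpha N r).
Definition Mtc (N r : nat) : Z -> nat -> nat -> C :=
  modmat N (compl_hat N (beta N r)) (compl_hat N (alpha N r)).
Definition Mtq (N r : nat) (s : bool) (n : Z) (i j : nat) : C :=
  Cadd (Mt N r n i j) (Cmul (RtoC (sg s)) (Cmul Ci (Mtc N r n i j))).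
Definition Mq (N r : nat) (s : bool) (n : Z) (i j : nat) : C := Mtq N r s n j i.

(* Main.v *)
Require Import Defs.
From Stdlib Require Import Reals ZArith Lra Lia Psatz.
Open Scope R_scope.

Ltac Cunf := unfold Cadd, Cmul, Copp, Cconj, RtoC, C0, Ci.
Ltac Csolve := apply injective_projections; Cunf; cbn [fst snd]; first [ring | field].

Lemma Csum_S n f : Csum (S n) f = Cadd (Csum n f) (f n).
Proof. reflexivity. Qed.

Lemma Csum_ext n f g : (forall k, (k < n)%nat -> f k = g k) -> Csum n f = Csum n g.
Proof. induction n; intros H; simpl; auto. rewrite IHn by (intros; apply H; lia).
  rewrite H by lia. reflexivity. Qed.

Lemma Csum_add n f g : Csum n (fun k => Cadd (f k) (g k)) = Cadd (Csum n f) (Csum n g).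
Proof. induction n. simpl. Csolve. rewrite !Csum_S, IHn. Csolve. Qed.

Lemma Csum_mull a n f : Csum n (fun k => Cmul a (f k)) = Cmul a (Csum n f).
Proof. induction n. simpl. Csolve. rewrite !Csum_S, IHn. Csolve. Qed.

Lemma Csum_mulr a n f : Csum n (fun k => Cmul (f k) a) = Cmul (Csum n f) a.
Proof. induction n. simpl. Csolve. rewrite !Csum_S, IHn. Csolve. Qed.

Lemma Csum_zero m : Csum m (fun _ => C0) = C0.
Proof. induction m. reflexivity. rewrite Csum_S, IHm. Csolve. Qed.

Lemma Csum_swap n m (f : nat -> nat -> Defs.C) :
  Csum n (fun i => Csum m (fun j => f i j)) = Csum m (fun j => Csum n (fun i => f i j)).
Proof. induction n. simpl. rewrite Csum_zero. reflexivity.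
  rewrite Csum_S, IHn, <- Csum_add. apply Csum_ext. intros. reflexivity. Qed.

Lemma Csum_first n f : Csum (S n) f = Cadd (f O) (Csum n (fun k => f (S k))).
Proof. induction n. simpl. Csolve. rewrite Csum_S, IHn, Csum_S. Csolve. Qed.

Definition cper N (F : Z -> Defs.C) := forall z, F (z + Z.of_nat N)%Z = F z.

Lemma Csum_shift1 N F : cper N F ->
  Csum N (fun k => F (Z.of_nat k + 1)%Z) = Csum N (fun k => F (Z.of_nat k)).
Proof. intros HF.
  assert (H1 := Csum_first N (fun k => F (Z.of_nat k))).
  rewrite Csum_S in H1. cbv beta in H1.
  assert (E : Csum N (fun k => F (Z.of_nat (S k))) = Csum N (fun k => F (Z.of_nat k + 1)%Z))
    by (apply Csum_ext; intros; rewrite Nat2Z.inj_succ; reflexivity).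
  assert (H0 : F (Z.of_nat N) = F 0%Z) by (specialize (HF 0%Z); rewrite Z.add_0_l in HF; exact HF).
  rewrite E, H0 in H1. change (Z.of_nat 0) with 0%Z in H1.
  apply injective_projections; [apply (f_equal fst) in H1 | apply (f_equal snd) in H1];
  unfold Cadd in H1; cbn [fst snd] in H1; idtac.
  all: lra.
Qed.

Lemma cper_shift N F m : cper N F -> cper N (fun z => F (z + m)%Z).
Proof. intros H z. cbv beta. replace (z + Z.of_nat N + m)%Z with (z + m + Z.of_nat N)%Z by ring. apply H. Qed.

Lemma Csum_shift N F m : cper N F ->
  Csum N (fun k => F (Z.of_nat k + Z.of_nat m)%Z) = Csum N (fun k => F (Z.of_nat k)).
Proof. induction m; intros HF.
  - apply Csum_ext; intros. f_equal. lia.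
  - rewrite <- (IHm HF).
    transitivity (Csum N (fun k => (fun z => F (z + Z.of_nat m)%Z) (Z.of_nat k + 1)%Z)).
    + apply Csum_ext; intros; cbv beta; f_equal; lia.
    + apply (Csum_shift1 N (fun z => F (z + Z.of_nat m)%Z)). apply cper_shift; auto.
Qed.

Lemma RtoC_Rsum n f : RtoC (Rsum n f) = Csum n (fun k => RtoC (f k)).
Proof. induction n. reflexivity. simpl. rewrite <- IHn. Csolve. Qed.

Lemma Cconj_Csum n f : Cconj (Csum n f) = Csum n (fun k => Cconj (f k)).
Proof. induction n. simpl. Csolve. rewrite !Csum_S, <- IHn. Csolve. Qed.

Lemma wpow_add N a b : wpow N (a + b) = Cmul (wpow N a) (wpow N b).
Proof. unfold wpow, Cexpi, Cmul; cbn [fst snd]. rewrite plus_IZR.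
  replace (2*PI*(IZR a + IZR b)/INR N) with (2*PI*IZR a/INR N + 2*PI*IZR b/INR N) by (unfold Rdiv; ring).
  rewrite cos_plus, sin_plus. f_equal; ring. Qed.

Lemma cs2PIq q : cos (2*PI*IZR q) = 1 /\ sin (2*PI*IZR q) = 0.
Proof. destruct (Z_le_gt_dec 0 q).
  - rewrite <- (Z2Nat.id q) by lia. rewrite <- INR_IZR_INZ.
    pose proof (cos_period 0 (Z.to_nat q)). pose proof (sin_period 0 (Z.to_nat q)).
    rewrite Rplus_0_l, cos_0 in H. rewrite Rplus_0_l, sin_0 in H0.
    replace (2*PI*INR (Z.to_nat q)) with (2 * INR (Z.to_nat q) * PI) by ring. auto.
  - replace q with (- Z.of_nat (Z.to_nat (-q)))%Z by lia. rewrite opp_IZR, <- INR_IZR_INZ.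
    pose proof (cos_period 0 (Z.to_nat (-q))). pose proof (sin_period 0 (Z.to_nat (-q))).
    rewrite Rplus_0_l, cos_0 in H. rewrite Rplus_0_l, sin_0 in H0.
    replace (2*PI* - INR (Z.to_nat (-q))) with (- (2 * INR (Z.to_nat (-q)) * PI)) by ring.
    rewrite cos_neg, sin_neg, H, H0. split; ring.
Qed.

Lemma wpow_Nq N q : N <> 0%nat -> wpow N (Z.of_nat N * q) = (1,0).
Proof. intros HN. unfold wpow, Cexpi. rewrite mult_IZR, <- INR_IZR_INZ.
  replace (2*PI*(INR N*IZR q)/INR N) with (2*PI*IZR q) by (field; apply not_0_INR; auto).
  destruct (cs2PIq q) as [H1 H2]; rewrite H1, H2; reflexivity. Qed.

Lemma wpow_opp N m : Cconj (wpow N m) = wpow N (-m).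
Proof. unfold wpow, Cexpi, Cconj; cbn [fst snd]. rewrite opp_IZR.
  replace (2*PI*-IZR m/INR N) with (-(2*PI*IZR m/INR N)) by (unfold Rdiv; ring).
  rewrite cos_neg, sin_neg. reflexivity. Qed.

Lemma csnpi k : cos (-(INR k * PI)) = (-1)^k /\ sin (-(INR k * PI)) = 0.
Proof. induction k.
  - simpl. rewrite Rmult_0_l, Ropp_0, cos_0, sin_0. auto.
  - rewrite S_INR. replace (-((INR k + 1)*PI)) with (-(INR k*PI) - PI) by ring.
    rewrite cos_minus, sin_minus, cos_PI, sin_PI. destruct IHk as [A B]; rewrite A, B. simpl. split; ring.
Qed.

Lemma wpow_half M k : (M <> 0)%nat ->
  wpow (2*M) (-(Z.of_nat k * Z.of_nat M)) = RtoC ((-1)^k).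
Proof. intros HM. unfold wpow.
  replace (2 * PI * IZR (- (Z.of_nat k * Z.of_nat M)) / INR (2 * M)) with (-(INR k * PI)).
  - unfold Cexpi, RtoC. destruct (csnpi k) as [A B]; rewrite A, B; reflexivity.
  - rewrite opp_IZR, mult_IZR, <- !INR_IZR_INZ, mult_INR. simpl (INR 2).
    field. apply not_0_INR; auto.
Qed.

Lemma Csum_parity M g :
  Cadd (Csum (2*M) g) (Csum (2*M) (fun k => Cmul (RtoC ((-1)^k)) (g k))) =
  Cmul (RtoC 2) (Csum M (fun l => g (2*l)%nat)).
Proof. induction M.
  - simpl. Csolve.
  - replace (2 * S M)%nat with (S (S (2*M))) by lia. rewrite !Csum_S. cbv beta.
    rewrite pow_1_even, pow_1_odd.
    transitivity (Cadd (Cadd (Csum (2*M) g) (Csum (2*M) (fun k => Cmul (RtoC ((-1)^k)) (g k))))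
       (Cadd (Cadd (g (2*M)%nat) (g (S (2*M)))) (Cadd (Cmul (RtoC 1) (g (2*M)%nat)) (Cmul (RtoC (-1)) (g (S (2*M))))))).
    Csolve. rewrite IHM. Csolve.
Qed.
Lemma dft_shift N x n' (j : nat) : N <> 0%nat -> periodic N x ->
  Cmul (wpow N (Z.of_nat j * n')) (dft N x n') =
  Csum N (fun k => Cmul (RtoC (x (Z.of_nat k + Z.of_nat j)%Z)) (wpow N (-(Z.of_nat k * n')))).
Proof. intros HN Hx. unfold dft. rewrite <- Csum_mull.
  set (G := fun z => Cmul (RtoC (x z)) (wpow N (-((z - Z.of_nat j) * n')))).
  transitivity (Csum N (fun k => G (Z.of_nat k))).
  - apply Csum_ext; intros k _. unfold G.
    replace (-((Z.of_nat k - Z.of_nat j)*n'))%Z with (Z.of_nat j * n' + -(Z.of_nat k * n'))%Z by ring.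
    rewrite wpow_add. Csolve.
  - rewrite <- (Csum_shift N G j).
    + apply Csum_ext; intros k _; unfold G.
      replace (- ((Z.of_nat k + Z.of_nat j - Z.of_nat j) * n'))%Z with (-(Z.of_nat k * n'))%Z by ring.
      reflexivity.
    + intro z; unfold G. rewrite Hx.
      replace (-((z + Z.of_nat N - Z.of_nat j)*n'))%Z with (-((z - Z.of_nat j) * n') + Z.of_nat N * (-n'))%Z by ring.
      rewrite wpow_add, wpow_Nq by auto. Csolve.
Qed.

Lemma conjdft N f n' X :
  Cmul (Cconj (dft N f n')) X =
  Csum N (fun j => Cmul (RtoC (f (Z.of_nat j))) (Cmul (wpow N (Z.of_nat j * n')) X)).
Proof. unfold dft. rewrite Cconj_Csum, <- Csum_mulr. apply Csum_ext; intros k _.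
  transitivity (Cmul (Cmul (RtoC (f (Z.of_nat k))) (Cconj (wpow N (-(Z.of_nat k * n'))))) X).
  Csolve. rewrite wpow_opp, Z.opp_involutive. Csolve. Qed.

Lemma Klem M x f n : (0 < M)%nat -> periodic (2*M) x -> periodic (2*M) f ->
  Csum M (fun l => Cmul (RtoC (coef (2*M) x f (Z.of_nat l))) (wpow (2*M) (-(2 * Z.of_nat l * n)))) =
  Cmul (RtoC (/2)) (Cadd (Cmul (Cconj (dft (2*M) f n)) (dft (2*M) x n))
                         (Cmul (Cconj (dft (2*M) f (n + Z.of_nat M))) (dft (2*M) x (n + Z.of_nat M)))).
Proof. intros HM Hx Hf.
  assert (HN : (2*M <> 0)%nat) by lia.
  transitivity (Csum M (fun l => Csum (2*M) (fun j => Cmul (RtoC (f (Z.of_nat j)))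
     (Cmul (RtoC (x (Z.of_nat j + 2*Z.of_nat l)%Z)) (wpow (2*M) (-(2*Z.of_nat l*n))))))).
  { apply Csum_ext; intros l _. unfold coef. rewrite RtoC_Rsum, <- Csum_mulr.
    set (G := fun z => Cmul (RtoC (x z * f (z - 2*Z.of_nat l)%Z)) (wpow (2*M) (-(2*Z.of_nat l*n)))).
    transitivity (Csum (2*M) (fun k => G (Z.of_nat k))). apply Csum_ext; intros; reflexivity.
    rewrite <- (Csum_shift (2*M) G (2*l)).
    - apply Csum_ext; intros j _. unfold G.
      replace (Z.of_nat j + Z.of_nat (2*l) - 2*Z.of_nat l)%Z with (Z.of_nat j) by lia.
      replace (Z.of_nat j + Z.of_nat (2*l))%Z with (Z.of_nat j + 2 * Z.of_nat l)%Z by lia.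
      Csolve.
    - intro z; unfold G. rewrite Hx.
      replace (z + Z.of_nat (2*M) - 2*Z.of_nat l)%Z with ((z - 2*Z.of_nat l) + Z.of_nat (2*M))%Z by ring.
      rewrite Hf. reflexivity. }
  rewrite Csum_swap.
  rewrite (conjdft (2*M) f n), (conjdft (2*M) f (n + Z.of_nat M)).
  rewrite <- Csum_add, <- Csum_mull. apply Csum_ext; intros j _.
  rewrite !dft_shift by auto.
  set (g := fun k : nat => Cmul (RtoC (x (Z.of_nat k + Z.of_nat j)%Z)) (wpow (2*M) (-(Z.of_nat k * n)))).
  assert (EB : Csum (2*M) (fun k => Cmul (RtoC (x (Z.of_nat k + Z.of_nat j)%Z)) (wpow (2*M) (-(Z.of_nat k * (n + Z.of_nat M)))))
     = Csum (2*M) (fun k => Cmul (RtoC ((-1)^k)) (g k))).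
  { apply Csum_ext; intros k _. unfold g.
    replace (-(Z.of_nat k*(n+Z.of_nat M)))%Z with (-(Z.of_nat k*n) + -(Z.of_nat k*Z.of_nat M))%Z by ring.
    rewrite wpow_add, wpow_half by lia. Csolve. }
  rewrite EB.
  change (Csum (2*M) (fun k => Cmul (RtoC (x (Z.of_nat k + Z.of_nat j)%Z)) (wpow (2*M) (-(Z.of_nat k * n)))))
    with (Csum (2*M) g).
  transitivity (Cmul (RtoC (/2)) (Cmul (RtoC (f (Z.of_nat j)))
     (Cadd (Csum (2*M) g) (Csum (2*M) (fun k => Cmul (RtoC ((-1)^k)) (g k)))))).
  2: Csolve.
  rewrite Csum_parity.
  transitivity (Cmul (RtoC (/ 2)) (Cmul (RtoC (f (Z.of_nat j))) (Cmul (RtoC 2)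
    (Csum M (fun l => Cmul (RtoC (x (Z.of_nat j + 2 * Z.of_nat l)%Z)) (wpow (2 * M) (- (2 * Z.of_nat l * n)))))))).
  - rewrite (Csum_mull (RtoC (f (Z.of_nat j))) M). Csolve.
  - f_equal. f_equal. f_equal. apply Csum_ext; intros l _. unfold g.
    replace (Z.of_nat (2*l) + Z.of_nat j)%Z with (Z.of_nat j + 2 * Z.of_nat l)%Z by lia.
    replace (Z.of_nat (2*l) * n)%Z with (2 * Z.of_nat l * n)%Z by lia. reflexivity.
Qed.

Lemma Zd M : (Z.of_nat (2*M) / 2 = Z.of_nat M)%Z.
Proof. rewrite Nat2Z.inj_mul, Z.mul_comm. apply Z.div_mul. lia. Qed.

Lemma row_i M x f g n s : (0 < M)%nat -> periodic (2*M) x -> periodic (2*M) f -> periodic (2*M) g ->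
  dft1 (2*M) (zpm s (coef (2*M) x f) (coef (2*M) x g)) n =
  Cmul (RtoC (/2)) (Cadd
    (Cmul (Cconj (Cadd (dft (2*M) f n) (Cmul (RtoC (sg s)) (Cmul Ci (dft (2*M) g n))))) (dft (2*M) x n))
    (Cmul (Cconj (Cadd (dft (2*M) f (n + Z.of_nat M)) (Cmul (RtoC (sg s)) (Cmul Ci (dft (2*M) g (n + Z.of_nat M))))))
       (dft (2*M) x (n + Z.of_nat M)))).
Proof. intros HM Hx Hf Hg. unfold dft1, zpm.
  replace ((2*M)/2)%nat with M by (rewrite Nat.mul_comm, Nat.div_mul; lia).
  transitivity (Cadd (Csum M (fun l => Cmul (RtoC (coef (2*M) x f (Z.of_nat l))) (wpow (2*M) (-(2 * Z.of_nat l * n)))))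
     (Cmul (Cmul (RtoC (- sg s)) Ci) (Csum M (fun l => Cmul (RtoC (coef (2*M) x g (Z.of_nat l))) (wpow (2*M) (-(2 * Z.of_nat l * n))))))).
  { rewrite <- Csum_mull, <- Csum_add. apply Csum_ext; intros; Csolve. }
  rewrite !Klem by auto. Csolve.
Qed.

Ltac ltbs := repeat match goal with |- context [(?a <? ?b)%Z] => destruct (Z.ltb_spec a b) end;
  cbn [andb]; try reflexivity; exfalso; lia.

Lemma ch_lo M (f : Z -> Defs.C) n : (0 < n < Z.of_nat M)%Z -> compl_hat (2*M) f n = Cmul (Copp Ci) (f n).
Proof. intros H. unfold compl_hat. rewrite Zd, Z.mod_small by lia. ltbs. Qed.
Lemma ch_hi M (f : Z -> Defs.C) n : (0 < n < Z.of_nat M)%Z -> compl_hat (2*M) f (n + Z.of_nat M) = Cmul Ci (f (n + Z.of_nat M)%Z).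
Proof. intros H. unfold compl_hat. rewrite Zd, Z.mod_small by lia. ltbs. Qed.
Lemma ch_0 M (f : Z -> Defs.C) : (0 < M)%nat -> compl_hat (2*M) f 0 = f 0%Z.
Proof. intros H. unfold compl_hat. rewrite Zd, Z.mod_small by lia. ltbs. Qed.
Lemma ch_M M (f : Z -> Defs.C) : (0 < M)%nat -> compl_hat (2*M) f (0 + Z.of_nat M) = f (0 + Z.of_nat M)%Z.
Proof. intros H. unfold compl_hat. rewrite Zd, Z.mod_small by lia. ltbs. Qed.
Lemma hm_lo M n : (0 < n < Z.of_nat M)%Z -> hilb_mult (2*M) n = Copp Ci.
Proof. intros H. unfold hilb_mult. rewrite Zd, Z.mod_small by lia. ltbs. Qed.
Lemma hm_hi M n : (0 < n < Z.of_nat M)%Z -> hilb_mult (2*M) (n + Z.of_nat M) = Ci.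
Proof. intros H. unfold hilb_mult. rewrite Zd, Z.mod_small by lia. ltbs. Qed.
Lemma hm_0 M : (0 < M)%nat -> hilb_mult (2*M) 0 = C0.
Proof. intros H. unfold hilb_mult. rewrite Zd, Z.mod_small by lia. ltbs. Qed.
Lemma hm_M M : (0 < M)%nat -> hilb_mult (2*M) (0 + Z.of_nat M) = C0.
Proof. intros H. unfold hilb_mult. rewrite Zd, Z.mod_small by lia. ltbs. Qed.

Lemma pow_ne0 (a : R) k : a <> 0 -> a ^ k <> 0.
Proof. apply pow_nonzero. Qed.

Lemma norm_ba N r n : (1 <= r)%nat ->
  fst (beta N r n) ^ 2 + snd (beta N r n) ^ 2 + fst (alpha N r n) ^ 2 + snd (alpha N r n) ^ 2 = 2.
Proof. intros Hr. unfold beta, alpha, Uf, RtoC, Cmul, wpow, Cexpi; cbn [fst snd].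
  set (c := cosN N n). set (s := sinN N n). set (t := 2*PI*IZR n/INR N).
  assert (cs : c^2 + s^2 = 1) by (unfold c, s, cosN, sinN; pose proof (sin2_cos2 (PI * IZR n / INR N)); unfold Rsqr in H; lra).
  assert (ct : cos t ^2 + sin t ^2 = 1) by (pose proof (sin2_cos2 t); unfold Rsqr in H; lra).
  replace (4*r)%nat with (2*r*2)%nat by lia. rewrite (pow_mult c (2*r) 2), (pow_mult s (2*r) 2).
  set (p := c ^ (2*r)). set (q := s ^ (2*r)).
  assert (Hpq : 0 < p^2 + q^2).
  { destruct (Req_dec c 0) as [Hc|Hc].
    - assert (s <> 0) by (intro; subst; nra).
      assert (q <> 0) by (apply pow_ne0; auto). nra.
    - assert (p <> 0) by (apply pow_ne0; auto). nra. }
  set (U := / 2 * (p ^ 2 + q ^ 2)).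
  assert (HU : 0 < U) by (unfold U; lra).
  assert (HsU := sqrt_lt_R0 U HU). assert (Hss := sqrt_sqrt U (Rlt_le _ _ HU)).
  set (su := sqrt U) in *.
  replace ((p / su) ^ 2 + 0 ^ 2 + (cos t * (q / su) - sin t * 0) ^ 2 + (cos t * 0 + sin t * (q / su)) ^ 2)
    with ((p^2 + q^2 * (cos t ^ 2 + sin t ^2)) / (su * su)) by (field; lra).
  rewrite ct, Hss. unfold U. field. lra.
Qed.

Lemma alpha0 M r : (1 <= r)%nat -> alpha (2*M) r 0 = C0.
Proof. intros Hr. unfold alpha, sinN. replace (PI * IZR 0 / INR (2*M)) with 0 by (simpl; unfold Rdiv; ring).
  rewrite sin_0, pow_i by lia. unfold Rdiv. rewrite Rmult_0_l. Csolve. Qed.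

Lemma betaM M r : (0 < M)%nat -> (1 <= r)%nat -> beta (2*M) r (0 + Z.of_nat M) = C0.
Proof. intros HM Hr. unfold beta, cosN. rewrite Z.add_0_l, <- INR_IZR_INZ, mult_INR.
  replace (PI * INR M / (INR 2 * INR M)) with (PI / 2) by (simpl; field; apply not_0_INR; lia).
  rewrite cos_PI2, pow_i by lia. unfold Rdiv. rewrite Rmult_0_l. Csolve. Qed.

Lemma mq_pp P : Cadd P (Cmul (RtoC 1) (Cmul Ci (Cmul (Copp Ci) P))) = Cmul (RtoC 2) P.
Proof. Csolve. Qed.
Lemma mq_pm P : Cadd P (Cmul (RtoC 1) (Cmul Ci (Cmul Ci P))) = C0.
Proof. Csolve. Qed.
Lemma mq_mp P : Cadd P (Cmul (RtoC (-1)) (Cmul Ci (Cmul (Copp Ci) P))) = C0.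
Proof. Csolve. Qed.
Lemma mq_mm P : Cadd P (Cmul (RtoC (-1)) (Cmul Ci (Cmul Ci P))) = Cmul (RtoC 2) P.
Proof. Csolve. Qed.
Lemma mq_z a : Cadd C0 (Cmul a (Cmul Ci C0)) = C0.
Proof. Csolve. Qed.
Lemma mq_h a u : Cadd u (Cmul a (Cmul Ci (Cmul C0 u))) = u.
Proof. Csolve. Qed.

Lemma finA P0 P1 u w :
  fst P0 ^ 2 + snd P0 ^ 2 + fst P1 ^ 2 + snd P1 ^ 2 = 2 ->
  Cadd (Cmul (Cmul (RtoC 2) P0) (Cmul (RtoC (/2)) (Cadd (Cmul (Cconj (Cmul (RtoC 2) P0)) u) (Cmul (Cconj C0) w))))
       (Cmul (Cmul (RtoC 2) P1) (Cmul (RtoC (/2)) (Cadd (Cmul (Cconj (Cmul (RtoC 2) P1)) u) (Cmul (Cconj C0) w))))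
  = Cmul (RtoC 2) (Cmul (RtoC 2) u).
Proof. destruct P0 as [a b], P1 as [c d], u as [u1 u2]; cbn [fst snd]; intros H.
  apply injective_projections; Cunf; cbn [fst snd].
  - transitivity (2 * (a^2+b^2+c^2+d^2) * u1). field. rewrite H. ring.
  - transitivity (2 * (a^2+b^2+c^2+d^2) * u2). field. rewrite H. ring.
Qed.

Lemma finA' P0 P1 u w :
  fst P0 ^ 2 + snd P0 ^ 2 + fst P1 ^ 2 + snd P1 ^ 2 = 2 ->
  Cadd (Cmul (Cmul (RtoC 2) P0) (Cmul (RtoC (/2)) (Cadd (Cmul (Cconj C0) w) (Cmul (Cconj (Cmul (RtoC 2) P0)) u))))
       (Cmul (Cmul (RtoC 2) P1) (Cmul (RtoC (/2)) (Cadd (Cmul (Cconj C0) w) (Cmul (Cconj (Cmul (RtoC 2) P1)) u))))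
  = Cmul (RtoC 2) (Cmul (RtoC 2) u).
Proof. destruct P0 as [a b], P1 as [c d], u as [u1 u2]; cbn [fst snd]; intros H.
  apply injective_projections; Cunf; cbn [fst snd].
  - transitivity (2 * (a^2+b^2+c^2+d^2) * u1). field. rewrite H. ring.
  - transitivity (2 * (a^2+b^2+c^2+d^2) * u2). field. rewrite H. ring.
Qed.

Lemma finZ X Y : Cadd (Cmul C0 X) (Cmul C0 Y) = Cmul (RtoC 2) C0.
Proof. Csolve. Qed.

Lemma finB0 B0 A1 u w (sv : R) : sv * sv = 1 -> fst B0 ^ 2 = 2 -> snd B0 = 0 ->
  let K0 := Cadd B0 (Cmul (RtoC sv) (Cmul Ci B0)) in
  let K1 := Cadd A1 (Cmul (RtoC sv) (Cmul Ci A1)) in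
  Cadd (Cmul K0 (Cmul (RtoC (/2)) (Cadd (Cmul (Cconj K0) u) (Cmul (Cconj C0) w))))
       (Cmul C0 (Cmul (RtoC (/2)) (Cadd (Cmul (Cconj C0) u) (Cmul (Cconj K1) w))))
  = Cmul (RtoC 2) u.
Proof. intros Hs Hb He K0 K1. destruct u as [u1 u2], B0 as [b e]. unfold K0, K1. cbn [fst snd] in Hb, He. subst e.
  apply injective_projections; Cunf; cbn [fst snd].
  - transitivity (b^2 * (1 + sv*sv) / 2 * u1). field. rewrite Hs, Hb. field.
  - transitivity (b^2 * (1 + sv*sv) / 2 * u2). field. rewrite Hs, Hb. field.
Qed.

Lemma finB1 B0 A1 u w (sv : R) : sv * sv = 1 -> fst A1 ^ 2 + snd A1 ^ 2 = 2 ->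
  let K0 := Cadd B0 (Cmul (RtoC sv) (Cmul Ci B0)) in
  let K1 := Cadd A1 (Cmul (RtoC sv) (Cmul Ci A1)) in
  Cadd (Cmul C0 (Cmul (RtoC (/2)) (Cadd (Cmul (Cconj K0) u) (Cmul (Cconj C0) w))))
       (Cmul K1 (Cmul (RtoC (/2)) (Cadd (Cmul (Cconj C0) u) (Cmul (Cconj K1) w))))
  = Cmul (RtoC 2) w.
Proof. intros Hs Hb K0 K1. destruct w as [w1 w2], A1 as [a c]. unfold K0, K1. cbn [fst snd] in Hb.
  apply injective_projections; Cunf; cbn [fst snd].
  - transitivity ((a^2+c^2) * (1 + sv*sv) / 2 * w1). field. rewrite Hs, Hb. field.
  - transitivity ((a^2+c^2) * (1 + sv*sv) / 2 * w2). field. rewrite Hs, Hb. field.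
Qed.

Lemma snd_beta N r n : snd (beta N r n) = 0.
Proof. reflexivity. Qed.

Theorem proposition4p2 (N J r : nat) (HN : N = (2 ^ J)%nat) (HJ : (1 <= J)%nat)
  (Hr : (1 <= r)%nat)
  (x h psi0 psi1 phi0 phi1 : Z -> R)
  (Hx : periodic N x) (Hhp : periodic N h)
  (Hh : forall n : Z, (0 <= n < Z.of_nat N)%Z ->
        dft N h n = Cmul (hilb_mult N n) (dft N x n))
  (Hpsi0p : periodic N psi0) (Hpsi1p : periodic N psi1)
  (Hphi0p : periodic N phi0) (Hphi1p : periodic N phi1)
  (Hpsi0 : forall n : Z, (0 <= n < Z.of_nat N)%Z -> dft N psi0 n = beta N r n)
  (Hpsi1 : forall n : Z, (0 <= n < Z.of_nat N)%Z -> dft N psi1 n = alpha N r n)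
  (Hphi0 : forall n : Z, (0 <= n < Z.of_nat N)%Z ->
           dft N phi0 n = compl_hat N (beta N r) n)
  (Hphi1 : forall n : Z, (0 <= n < Z.of_nat N)%Z ->
           dft N phi1 n = compl_hat N (alpha N r) n)
  (s : bool) (n : Z) (Hn : (0 <= n < Z.of_nat N / 2)%Z) :
  let y0 := coef N x psi0 in
  let y1 := coef N x psi1 in
  let c0 := coef N x phi0 in
  let c1 := coef N x phi1 in
  let Z0 := dft1 N (zpm s y0 c0) n in
  let Z1 := dft1 N (zpm s y1 c1) n in
  let xa := dft N x n in
  let xb := dft N x (n + Z.of_nat N / 2)%Z in
  let ha := dft N h n in
  let hb := dft N h (n + Z.of_nat N / 2)%Z in
  (* (i) *)
  (Z0 = Cmul (RtoC (/ 2)) (Cadd (Cmul (Cconj (Mtq N r s n 0 0)) xa)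
                                (Cmul (Cconj (Mtq N r s n 0 1)) xb)) /\
   Z1 = Cmul (RtoC (/ 2)) (Cadd (Cmul (Cconj (Mtq N r s n 1 0)) xa)
                                (Cmul (Cconj (Mtq N r s n 1 1)) xb))) /\
  (* (ii) *)
  (Cadd (Cmul (Mq N r s n 0 0) Z0) (Cmul (Mq N r s n 0 1) Z1) =
     Cmul (RtoC 2) (Cadd xa (Cmul (RtoC (sg s)) (Cmul Ci ha))) /\
   Cadd (Cmul (Mq N r s n 1 0) Z0) (Cmul (Mq N r s n 1 1) Z1) =
     Cmul (RtoC 2) (Cadd xb (Cmul (RtoC (sg s)) (Cmul Ci hb)))).
Proof.
  cbv zeta.
  destruct J as [|J']; [lia|].
  assert (HM0 : (2^J' <> 0)%nat) by (apply Nat.pow_nonzero; lia).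
  assert (HN2 : N = (2 * 2^J')%nat) by (rewrite HN; reflexivity).
  clear HN. remember (2^J')%nat as M eqn:HMdef. clear HMdef. subst N.
  assert (HM : (0 < M)%nat) by lia.
  rewrite Zd in Hn |- *.
  assert (E0 : dft1 (2*M) (zpm s (coef (2*M) x psi0) (coef (2*M) x phi0)) n =
    Cmul (RtoC (/2)) (Cadd (Cmul (Cconj (Mtq (2*M) r s n 0 0)) (dft (2*M) x n))
       (Cmul (Cconj (Mtq (2*M) r s n 0 1)) (dft (2*M) x (n + Z.of_nat M))))).
  { rewrite row_i by auto. unfold Mtq, Mt, Mtc, modmat. cbv beta zeta iota. rewrite Zd.
    rewrite (Hpsi0 n), (Hphi0 n), (Hpsi0 (n + Z.of_nat M)%Z), (Hphi0 (n + Z.of_nat M)%Z) by lia.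
    reflexivity. }
  assert (E1 : dft1 (2*M) (zpm s (coef (2*M) x psi1) (coef (2*M) x phi1)) n =
    Cmul (RtoC (/2)) (Cadd (Cmul (Cconj (Mtq (2*M) r s n 1 0)) (dft (2*M) x n))
       (Cmul (Cconj (Mtq (2*M) r s n 1 1)) (dft (2*M) x (n + Z.of_nat M))))).
  { rewrite row_i by auto. unfold Mtq, Mt, Mtc, modmat. cbv beta zeta iota. rewrite Zd.
    rewrite (Hpsi1 n), (Hphi1 n), (Hpsi1 (n + Z.of_nat M)%Z), (Hphi1 (n + Z.of_nat M)%Z) by lia.
    reflexivity. }
  rewrite E0, E1. split; [split; reflexivity|].
  rewrite (Hh n), (Hh (n + Z.of_nat M)%Z) by lia.
  unfold Mq, Mtq, Mt, Mtc, modmat. cbv beta zeta iota. rewrite Zd.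
  set (u := dft (2*M) x n). set (w := dft (2*M) x (n + Z.of_nat M)).
  clearbody u w. clear E0 E1 Hh Hpsi0 Hpsi1 Hphi0 Hphi1.
  destruct (Z.eq_dec n 0) as [->|Hn0].
  - rewrite !ch_0, !ch_M, hm_0, hm_M by auto.
    rewrite alpha0, betaM by auto.
    pose proof (norm_ba (2*M) r 0 Hr) as N0. pose proof (norm_ba (2*M) r (0 + Z.of_nat M) Hr) as N1.
    rewrite alpha0 in N0 by auto. rewrite betaM in N1 by auto. unfold C0 in N0, N1. cbn [fst snd] in N0, N1.
    rewrite !snd_beta in N0.
    rewrite !mq_z, !mq_h.
    assert (Hb : fst (beta (2*M) r 0) ^ 2 = 2) by lra.
    assert (Ha : fst (alpha (2*M) r (0 + Z.of_nat M)) ^ 2 + snd (alpha (2*M) r (0 + Z.of_nat M)) ^ 2 = 2) by lra.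
    destruct s; simpl sg; split.
    + apply finB0; auto; lra.
    + apply finB1; auto; lra.
    + apply finB0; auto; lra.
    + apply finB1; auto; lra.
  - assert (Hn' : (0 < n < Z.of_nat M)%Z) by lia.
    rewrite (ch_lo M _ n Hn'), (ch_lo M _ n Hn'), (ch_hi M _ n Hn'), (ch_hi M _ n Hn'), hm_lo, hm_hi by auto.
    pose proof (norm_ba (2*M) r n Hr) as N0. pose proof (norm_ba (2*M) r (n + Z.of_nat M) Hr) as N1.
    destruct s; simpl sg.
    + rewrite !mq_pp, !mq_pm. split.
      * apply finA. lra.
      * apply finZ.
    + rewrite !mq_mp, !mq_mm. split.
      * apply finZ.
      * apply finA'. lra.
Qed.
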